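(* Let $\kappa=\kappa(|x|^2)$ and $\rho=\rho(|x|^2)$ be arbitrary smooth functions on a domain in $\mathbb{R}^n$ with $1-\kappa|x|^2>0$, and let $C$ be a non-zero constant. Then the Riemannian metric $$\bar\alpha=e^\rho\sqrt{|y|^2-\kappa\langle x,y\rangle^2}$$ has the closed and conformal $1$-form $$\bar\beta=C\sqrt{1-\kappa|x|^2}\,e^{2\rho}\langle x,y\rangle,$$ and $\bar b^2:=\|\bar\beta\|_{\bar\alpha}^2=C^2e^{2\rho}|x|^2$.
   Context: $|\cdot|$ and $\langle\cdot,\cdot\rangle$ denote the Euclidean norm and inner product on $\mathbb{R}^n$, and $(x,y)$ are standard coordinates on $T\mathbb{R}^n$. A $1$-form $\bar\beta=\bar b_iy^i$ is closed and conformal with respect to $\bar\alpha=\sqrt{\bar a_{ij}y^iy^j}$ if $\bar b_{i|j}=c(x)\bar a_{ij}$ for some function $c$, covariant derivative taken with respect to the Levi-Civita connection of $\bar\alpha$. *)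

(* Defs.v *)
From HB Require Import structures.
From mathcomp Require Import all_boot all_order all_algebra.
From mathcomp Require Import all_classical all_reals all_analysis.
Import Order.TTheory GRing.Theory Num.Theory.
Import numFieldNormedType.Exports.
Local Open Scope ring_scope.
Local Open Scope classical_set_scope.

Section Defs.
Context {R : realType} {n : nat}.

Definition dotp (x y : 'rV[R]_n) : R := \sum_i x 0 i * y 0 i.
Definition sqnorm (x : 'rV[R]_n) : R := dotp x x.

Definition evec (j : 'I_n) : 'rV[R]_n := delta_mx 0 j.
Definition pd (f : 'rV[R]_n -> R) (j : 'I_n) (x : 'rV[R]_n) : R :=
  'D_(evec j) f x.

Definition christoffel (a : 'rV[R]_n -> 'M[R]_n) (x : 'rV[R]_n)
  (k i j : 'I_n) : R :=
  2^-1 * \sum_l (invmx (a x)) k l *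
    (pd (fun z => a z l j) i x + pd (fun z => a z l i) j x
     - pd (fun z => a z i j) l x).

Definition covd (a : 'rV[R]_n -> 'M[R]_n) (b : 'rV[R]_n -> 'rV[R]_n)
  (x : 'rV[R]_n) (i j : 'I_n) : R :=
  pd (fun z => b z 0 i) j x - \sum_k christoffel a x k i j * b x 0 k.

(* beta = b_i y^i is closed and conformal w.r.t. alpha = sqrt(a_ij y^i y^j)
   on D: b_{i|j} = c(x) a_{ij} for some function c. *)
Definition closed_conformal_on (D : set 'rV[R]_n)
  (a : 'rV[R]_n -> 'M[R]_n) (b : 'rV[R]_n -> 'rV[R]_n) : Prop :=
  exists c : 'rV[R]_n -> R,
    forall x, D x -> forall i j, covd a b x i j = c x * a x i j.

Definition form_sqnorm (a : 'rV[R]_n -> 'M[R]_n) (b : 'rV[R]_n -> 'rV[R]_n)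
  (x : 'rV[R]_n) : R :=
  (b x *m invmx (a x) *m (b x)^T) 0 0.

End Defs.

Definition smooth_on {R : realType} (U : set R) (f : R -> R) : Prop :=
  forall (k : nat) (t : R), U t -> derivable (iter k (fun g => g^`()) f) t 1.

(* Main.v *)
Require Import Defs.
From HB Require Import structures.
From mathcomp Require Import all_boot all_order all_algebra.
From mathcomp Require Import all_classical all_reals all_analysis.
From mathcomp Require Import ring lra.
Import Order.TTheory GRing.Theory Num.Theory.
Import numFieldNormedType.Exports.
Local Open Scope ring_scope.
Local Open Scope classical_set_scope.

Module Helpers.
Set Implicit Arguments. Unset Strict Implicit.
Section H.
Variables (R : realType) (n : nat).

Lemma pd_uni (h : 'rV[R]_n -> R) l x :
  pd h l x = 'D_1 (fun t : R => h (t *: evec l + x)) 0.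
Proof.
rewrite /pd /derive; f_equal; f_equal; apply/funext => t /=.
by rewrite addr0 scale0r add0r [t *: 1]mulr1.
Qed.

Lemma dlin (c d x0 : R) : is_derive x0 1 (fun t : R => t * c + d) c.
Proof.
apply: (is_derive_eq (is_deriveD (is_deriveM (is_derive_id x0 1) (is_derive_cst c x0 1)) (is_derive_cst d x0 1))).
by rewrite scaler0 add0r addr0 [c%:A]mulr1.
Qed.

Lemma d_coord (x : 'rV[R]_n) l i :
  is_derive (0:R) 1 (fun t : R => (t *: evec l + x) 0 i) ((i == l)%:R).
Proof.
have -> : (fun t : R => (t *: evec l + x) 0 i) = (fun t => t * (i == l)%:R + x 0 i).
  by apply/funext => t; rewrite /evec !mxE.
exact: dlin.
Qed.
Lemma dS (x : 'rV[R]_n) l :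
  is_derive (0:R) 1 (fun t : R => sqnorm (t *: evec l + x)) (2 * x 0 l).
Proof.
have -> : (fun t : R => sqnorm (t *: evec l + x)) =
   \sum_(i < n) (fun t : R => (t *: evec l + x) 0 i * (t *: evec l + x) 0 i).
  by rewrite fct_sumE; apply/funext => t.
apply: is_derive_eq.
  apply: is_derive_sum => i; apply: is_deriveM; exact: d_coord.
rewrite /= (bigD1 l) //= big1 => [|j /negbTE ->].
  by rewrite scale0r add0r eqxx addr0 /GRing.scale /= mulr1 -mulr2n mulr_natl.
by rewrite /GRing.scale /= mulr0 addr0.
Qed.

Lemma dcompS (f : R -> R) fs (x : 'rV[R]_n) l :
  is_derive (sqnorm x) 1 f fs ->
  is_derive (0:R) 1 (fun t : R => f (sqnorm (t *: evec l + x))) (fs * (2 * x 0 l)).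
Proof.
move=> hf; apply: (@is_derive1_comp _ f (fun t => sqnorm (t *: evec l + x))).
  by rewrite scale0r add0r.
exact: dS.
Qed.
Lemma dM (f g : R -> R) (x0 df dg : R) : is_derive x0 1 f df -> is_derive x0 1 g dg ->
  is_derive x0 1 (fun t => f t * g t) (f x0 * dg + g x0 * df).
Proof. by move=> hf hg; exact: (is_deriveM hf hg). Qed.

Lemma dSub (f g : R -> R) (x0 df dg : R) : is_derive x0 1 f df -> is_derive x0 1 g dg ->
  is_derive x0 1 (fun t => f t - g t) (df - dg).
Proof. by move=> hf hg; exact: (is_deriveB hf hg). Qed.

Lemma dCst (c x0 : R) : is_derive x0 1 (fun _ : R => c) 0.
Proof. exact: is_derive_cst. Qed.

Lemma dCM (c : R) (f : R -> R) (x0 df : R) : is_derive x0 1 f df ->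
  is_derive x0 1 (fun t => c * f t) (c * df).
Proof. by move=> hf; exact: (is_deriveZ c hf). Qed.

Lemma dExp (f : R -> R) (x0 df : R) : is_derive x0 1 f df ->
  is_derive x0 1 (fun t => expR (f t)) (expR (f x0) * df).
Proof. by move=> hf; exact: (is_derive1_comp (is_derive_expR (f x0)) hf). Qed.

Lemma dSqrt (f : R -> R) (x0 df : R) : 0 < f x0 -> is_derive x0 1 f df ->
  is_derive x0 1 (fun t => Num.sqrt (f t)) ((2 * Num.sqrt (f x0))^-1 * df).
Proof. by move=> h0 hf; exact: (is_derive1_comp (is_derive1_sqrt h0) hf). Qed.

Section Fn.
Variables (kappa rho : R -> R) (C : R).
Definition Ff (z : 'rV[R]_n) := expR (2 * rho (sqnorm z)).
Definition Aij i j (z : 'rV[R]_n) :=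
  Ff z * ((i == j)%:R - kappa (sqnorm z) * z 0 i * z 0 j).
Definition Bi i (z : 'rV[R]_n) :=
  C * Num.sqrt (1 - kappa (sqnorm z) * sqnorm z) * Ff z * z 0 i.

Lemma pdA (x : 'rV[R]_n) k1 r1 i j l :
  is_derive (sqnorm x) 1 kappa k1 -> is_derive (sqnorm x) 1 rho r1 ->
  pd (Aij i j) l x =
   Ff x * (2 * (r1 * (2 * x 0 l))) * ((i == j)%:R - kappa (sqnorm x) * x 0 i * x 0 j)
   - Ff x * (k1 * (2 * x 0 l) * x 0 i * x 0 j
             + kappa (sqnorm x) * (i == l)%:R * x 0 j
             + kappa (sqnorm x) * x 0 i * (j == l)%:R).
Proof.
move=> hk hr; rewrite pd_uni; apply: derive_val; apply: is_derive_eq.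
  rewrite /Aij /Ff; apply: dM.
    apply: dExp; apply: dCM; exact: dcompS.
  apply: dSub.
  apply: dM; last exact: d_coord.
  apply: dM; last exact: d_coord.
  exact: dcompS.
rewrite /= /Ff !scale0r !add0r.
ring.
Qed.

Lemma pdB (x : 'rV[R]_n) k1 r1 i l :
  is_derive (sqnorm x) 1 kappa k1 -> is_derive (sqnorm x) 1 rho r1 ->
  0 < 1 - kappa (sqnorm x) * sqnorm x ->
  pd (Bi i) l x =
   C * ((2 * Num.sqrt (1 - kappa (sqnorm x) * sqnorm x))^-1 *
          (- (k1 * (2 * x 0 l) * sqnorm x + kappa (sqnorm x) * (2 * x 0 l)))) * Ff x * x 0 i
   + C * Num.sqrt (1 - kappa (sqnorm x) * sqnorm x) * (Ff x * (2 * (r1 * (2 * x 0 l)))) * x 0 i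
   + C * Num.sqrt (1 - kappa (sqnorm x) * sqnorm x) * Ff x * (i == l)%:R.
Proof.
move=> hk hr hP; rewrite pd_uni; apply: derive_val; apply: is_derive_eq.
  rewrite /Bi /Ff; apply: dM; last exact: d_coord.
  apply: dM; last (apply: dExp; apply: dCM; exact: dcompS).
  apply: dCM; apply: dSqrt.
    by rewrite /= scale0r add0r.
  apply: dSub.
  apply: dM; [exact: dcompS | exact: dS].
rewrite /= /Ff !scale0r !add0r.
ring.
Qed.
End Fn.
End H.

Section A.
Variables (R : realType) (n : nat).
Implicit Types (x y : 'rV[R]_n) (M : 'M[R]_n).

Definition Q M y := (y *m M *m y^T) 0 0.

Lemma Q_entry M i j : (delta_mx (0:'I_1) i *m M *m (delta_mx (0:'I_1) j)^T) 0 0 = M i j.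
Proof. by rewrite trmx_delta -rowE -colE !mxE. Qed.

Lemma QD M u v : M^T = M -> Q M (u + v) = Q M u + Q M v + 2 * (u *m M *m v^T) 0 0.
Proof.
move=> hM; rewrite /Q linearD /= !mulmxDl !mulmxDr.
have -> : v *m M *m u^T = (u *m M *m v^T)^T.
  by rewrite !trmx_mul trmxK hM mulmxA.
set A := u *m M *m u^T; set B := u *m M *m v^T; set C := v *m M *m v^T.
rewrite !mxE; ring.
Qed.

Lemma polar M N : M^T = M -> N^T = N -> (forall y, Q M y = Q N y) -> M = N.
Proof.
move=> hM hN hQ; apply/matrixP => i j.
have e1 := hQ (delta_mx (0:'I_1) i + delta_mx 0 j).
rewrite !QD // /Q !Q_entry in e1.
have e2 := hQ (delta_mx (0:'I_1) i); have e3 := hQ (delta_mx (0:'I_1) j).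
rewrite /Q !Q_entry in e2 e3.
lra.
Qed.

Lemma dotpC x y : dotp x y = dotp y x.
Proof. by rewrite /dotp; apply: eq_bigr => i _; rewrite mulrC. Qed.

Lemma dotp_mx x y : (x *m y^T) 0 0 = dotp x y.
Proof. by rewrite mxE; apply: eq_bigr => i _; rewrite mxE. Qed.

Lemma sqnorm_ge0 y : 0 <= sqnorm y.
Proof. by apply: sumr_ge0 => i _; rewrite -expr2 sqr_ge0. Qed.

Lemma sqnorm_gt0 y : y != 0 -> 0 < sqnorm y.
Proof.
move=> y0.
case: (pickP (fun i => y 0 i != 0)) => [i yi | H]; last first.
  have y00 : y = 0.
    by apply/rowP => i; have := H i; rewrite /= => /negbFE/eqP ->; rewrite mxE.
  by move: y0; rewrite y00 eqxx.
rewrite /sqnorm /dotp (bigD1 i) //=.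
have h1 : 0 < y 0 i * y 0 i by rewrite lt0r mulf_neq0 //= -expr2 sqr_ge0.
have h2 : 0 <= \sum_(j < n | j != i) y 0 j * y 0 j.
  by apply: sumr_ge0 => j _; rewrite -expr2 sqr_ge0.
lra.
Qed.

Lemma CS x y : dotp x y ^+ 2 <= sqnorm x * sqnorm y.
Proof.
have h : 0 <= \sum_(i < n) \sum_(j < n) (x 0 i * y 0 j - x 0 j * y 0 i) ^+ 2.
  by apply: sumr_ge0 => i _; apply: sumr_ge0 => j _; exact: sqr_ge0.
have e : \sum_(i < n) \sum_(j < n) (x 0 i * y 0 j - x 0 j * y 0 i) ^+ 2
   = 2 * (sqnorm x * sqnorm y - dotp x y ^+ 2).
  have e1 : sqnorm x * sqnorm y = \sum_(i < n) \sum_(j < n) (x 0 i * x 0 i) * (y 0 j * y 0 j).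
    by rewrite /sqnorm /dotp mulr_suml; apply: eq_bigr => i _; rewrite mulr_sumr.
  have e2 : sqnorm x * sqnorm y = \sum_(i < n) \sum_(j < n) (x 0 j * x 0 j) * (y 0 i * y 0 i).
    rewrite mulrC /sqnorm /dotp mulr_suml; apply: eq_bigr => i _; rewrite mulr_sumr.
    by apply: eq_bigr => j _; rewrite mulrC.
  have e3 : dotp x y ^+ 2 = \sum_(i < n) \sum_(j < n) (x 0 i * y 0 i) * (x 0 j * y 0 j).
    by rewrite expr2 /dotp mulr_suml; apply: eq_bigr => i _; rewrite mulr_sumr.
  have -> : 2 * (sqnorm x * sqnorm y - dotp x y ^+ 2) =
     sqnorm x * sqnorm y + sqnorm x * sqnorm y - 2 * dotp x y ^+ 2 by ring.
  rewrite {1}e1 e2 e3 -big_split /= mulr_sumr -sumrB.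
  apply: eq_bigr => i _; rewrite -big_split /= mulr_sumr -sumrB.
  by apply: eq_bigr => j _; ring.
lra.
Qed.
End A.

Section B.
Variables (R : realType) (n : nat).
Implicit Types (x y : 'rV[R]_n) (M : 'M[R]_n).

Definition Nm x (k F : R) : 'M[R]_n := F *: (1%:M - k *: (x^T *m x)).

Lemma X_entry x i j : (x^T *m x) i j = x 0 i * x 0 j.
Proof. by rewrite mxE big_ord1 mxE. Qed.

Lemma Nm_entry x k F i j : Nm x k F i j = F * ((i == j)%:R - k * x 0 i * x 0 j).
Proof. by rewrite /Nm !mxE big_ord1 mxE mulrA. Qed.

Lemma Nm_sym x k F : (Nm x k F)^T = Nm x k F.
Proof. by apply/matrixP => i j; rewrite mxE !Nm_entry eq_sym; congr (_ * (_ - _)); ring. Qed.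

Lemma xxT x : x *m x^T = (sqnorm x)%:M.
Proof. by rewrite [LHS]mx11_scalar dotp_mx. Qed.

Lemma Q_Nm x k F y : Q (Nm x k F) y = F * (sqnorm y - k * dotp x y ^+ 2).
Proof.
rewrite /Q /Nm -scalemxAr mulmxBr mulmx1 -scalemxAr -scalemxAl mulmxBl -scalemxAl.
rewrite !mulmxA -[y *m x^T *m x *m y^T]mulmxA.
rewrite [y *m x^T]mx11_scalar [x *m y^T]mx11_scalar mul_scalar_mx.
rewrite !dotp_mx; set A := y *m y^T; rewrite !mxE eqxx mulr1n (dotpC y x).
have -> : \sum_j y 0 j * y^T j 0 = sqnorm y by apply: eq_bigr => j _; rewrite mxE.
ring.
Qed.

Lemma XX x : (x^T *m x) *m (x^T *m x) = sqnorm x *: (x^T *m x).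
Proof.
by rewrite mulmxA -[x^T *m x *m x^T]mulmxA xxT mul_mx_scalar scalemxAl.
Qed.

Lemma Nm_inv x k F : F != 0 -> 1 - k * sqnorm x != 0 ->
  Nm x k F *m (F^-1 *: (1%:M + (k / (1 - k * sqnorm x)) *: (x^T *m x))) = 1%:M.
Proof.
move=> hF hP; rewrite /Nm -scalemxAl -scalemxAr scalerA mulfV // scale1r.
rewrite mulmxDr mulmx1 -scalemxAr mulmxBl mul1mx -scalemxAl XX.
set X := x^T *m x; set t := k / _.
have -> : 1%:M - k *: X + t *: (X - k *: (sqnorm x *: X)) =
          1%:M + (t - k - k * t * sqnorm x) *: X.
  by apply/matrixP => i j; rewrite !mxE; ring.
suff -> : t - k - k * t * sqnorm x = 0 by rewrite scale0r addr0.
by rewrite /t; field.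
Qed.

Lemma w_Nm x k F (c : R) : (c *: x) *m Nm x k F = (c * F * (1 - k * sqnorm x)) *: x.
Proof.
rewrite /Nm -scalemxAl -scalemxAr mulmxBr mulmx1 -scalemxAr mulmxA xxT mul_scalar_mx.
by apply/rowP => i; rewrite !mxE; ring.
Qed.
Lemma sum_delta (f : 'I_n -> R) i : \sum_l f l * (l == i)%:R = f i.
Proof.
rewrite (bigD1 i) //= eqxx mulr1 big1 ?addr0 // => l /negbTE ->; exact: mulr0.
Qed.

Lemma dotp_delta x i : dotp x (delta_mx 0 i) = x 0 i.
Proof.
rewrite /dotp -[RHS](sum_delta (fun l => x 0 l) i); apply: eq_bigr => l _.
by rewrite mxE.
Qed.

Lemma chr_sum (a : 'rV[R]_n -> 'M[R]_n) (b : 'rV[R]_n -> 'rV[R]_n) x i j :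
  \sum_k christoffel a x k i j * b x 0 k =
  2^-1 * \sum_l (b x *m invmx (a x)) 0 l *
     (pd (fun z => a z l j) i x + pd (fun z => a z l i) j x - pd (fun z => a z i j) l x).
Proof.
rewrite /christoffel.
set S := fun l => (pd (fun z => a z l j) i x + pd (fun z => a z l i) j x - pd (fun z => a z i j) l x).
transitivity (\sum_k \sum_l 2^-1 * (b x 0 k * invmx (a x) k l * S l)).
  apply: eq_bigr => k _; rewrite mulr_sumr mulr_suml; apply: eq_bigr => l _.
  rewrite /S; ring.
rewrite exchange_big mulr_sumr; apply: eq_bigr => l _.
rewrite mxE mulr_suml mulr_sumr; apply: eq_bigr => k _; rewrite /S; ring.
Qed.
End B.

End Helpers.
Import Helpers.

Theorem corollary5p3 (R : realType) (n : nat) (D : set 'rV[R]_n) (U : set R)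
  (kappa rho : R -> R) (C : R)
  (a : 'rV[R]_n -> 'M[R]_n) (b : 'rV[R]_n -> 'rV[R]_n) :
  open D -> connected D ->
  open U -> (forall x, D x -> U (sqnorm x)) ->
  smooth_on U kappa -> smooth_on U rho ->
  (forall x, D x -> 0 < 1 - kappa (sqnorm x) * sqnorm x) ->
  C != 0 ->
  let alpha := fun x y : 'rV[R]_n =>
    expR (rho (sqnorm x)) * Num.sqrt (sqnorm y - kappa (sqnorm x) * dotp x y ^+ 2) in
  let beta := fun x y : 'rV[R]_n =>
    C * Num.sqrt (1 - kappa (sqnorm x) * sqnorm x) * expR (2 * rho (sqnorm x)) * dotp x y in
  (* a_ij is the (symmetric) matrix of alpha: alpha^2 = a_ij y^i y^j *)
  (forall x, D x -> (a x)^T = a x /\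
     forall y, alpha x y ^+ 2 = (y *m a x *m y^T) 0 0) ->
  (* b_i are the coefficients of beta: beta = b_i y^i *)
  (forall x, D x -> forall y, beta x y = (y *m (b x)^T) 0 0) ->
  (forall x, D x -> forall y, y != 0 -> 0 < alpha x y) /\
  closed_conformal_on D a b /\
  (forall x, D x ->
     form_sqnorm a b x = C ^+ 2 * expR (2 * rho (sqnorm x)) * sqnorm x).
Proof.
move=> hDo _ _ hDU hk hr hP hC alpha beta Ha Hb.
have Hpos : forall x, D x -> forall y,
    0 <= sqnorm y - kappa (sqnorm x) * dotp x y ^+ 2 /\
    (y != 0 -> 0 < sqnorm y - kappa (sqnorm x) * dotp x y ^+ 2).
  move=> x Dx y; have hPx := hP x Dx.
  have cs := CS x y; have hy := sqnorm_ge0 y.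
  set k := kappa (sqnorm x) in hPx *; set d := dotp x y ^+ 2 in cs *.
  have d0 : 0 <= d by rewrite /d sqr_ge0.
  have [k0|k0] := leP k 0.
    have : k * d <= 0 by rewrite mulr_le0_ge0.
    split; first lra.
    by move=> /sqnorm_gt0 y0; lra.
  have h1 : k * d <= k * (sqnorm x * sqnorm y) by rewrite ler_pM2l.
  have h2 : 0 <= (1 - k * sqnorm x) * sqnorm y by rewrite mulr_ge0 // ltW.
  split; first lra.
  move=> /sqnorm_gt0 y0.
  have h3 : 0 < (1 - k * sqnorm x) * sqnorm y by rewrite mulr_gt0.
  lra.
split.
  move=> x Dx y y0; rewrite /alpha mulr_gt0 ?expR_gt0 // sqrtr_gt0.
  by case: (Hpos x Dx y) => _ ->.
have Ha' : forall x, D x -> a x = Nm x (kappa (sqnorm x)) (Ff rho x).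
  move=> x Dx; case: (Ha x Dx) => hs hq.
  apply: polar => //; first exact: Nm_sym.
  move=> y; rewrite Q_Nm /Q -hq /alpha exprMn sqr_sqrtr; last by case: (Hpos x Dx y).
  by rewrite /Ff -expRM_natl.
have Hb' : forall x, D x -> b x =
    (C * Num.sqrt (1 - kappa (sqnorm x) * sqnorm x) * Ff rho x) *: x.
  move=> x Dx; apply/rowP => i.
  have := Hb x Dx (delta_mx 0 i).
  rewrite /beta dotp_delta -rowE !mxE => <-.
  by rewrite /Ff.
have Hw : forall x, D x -> b x *m invmx (a x) =
    (C / Num.sqrt (1 - kappa (sqnorm x) * sqnorm x)) *: x.
  move=> x Dx; have hPx := hP x Dx.
  have q0 : Num.sqrt (1 - kappa (sqnorm x) * sqnorm x) != 0 by rewrite gt_eqF // sqrtr_gt0.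
  have F0 : Ff rho x != 0 by rewrite gt_eqF // expR_gt0.
  have [ua _] := mulmx1_unit (Nm_inv F0 (lt0r_neq0 hPx)).
  rewrite Ha' // in ua *.
  suff -> : b x = (C / Num.sqrt (1 - kappa (sqnorm x) * sqnorm x)) *: x *m Nm x (kappa (sqnorm x)) (Ff rho x).
    exact: mulmxK.
  rewrite Hb' // w_Nm; congr (_ *: _).
  have hq2 := sqr_sqrtr (ltW hPx).
  set q := Num.sqrt _ in q0 hq2 *; set P := 1 - _ in hq2 *.
  rewrite -hq2; field; done.
split; last first.
  move=> x Dx; have hPx := hP x Dx.
  have q0 : Num.sqrt (1 - kappa (sqnorm x) * sqnorm x) != 0 by rewrite gt_eqF // sqrtr_gt0.
  rewrite /form_sqnorm Hw // Hb' //.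
  rewrite [X in _ *m X]linearZ /= -scalemxAr -scalemxAl. set M := x *m x^T. rewrite !mxE.
  have -> : \sum_j x 0 j * x^T j 0 = sqnorm x by apply: eq_bigr => j _; rewrite mxE.
  rewrite /Ff.
  by field.
set c := fun x : 'rV[R]_n =>
  C * Num.sqrt (1 - kappa (sqnorm x) * sqnorm x)
  + C / Num.sqrt (1 - kappa (sqnorm x) * sqnorm x)
    * (kappa (sqnorm x) + 2 * 'D_1 rho (sqnorm x)) * sqnorm x.
exists c => x Dx i j.
have hPx := hP x Dx.
have q0 : Num.sqrt (1 - kappa (sqnorm x) * sqnorm x) != 0 by rewrite gt_eqF // sqrtr_gt0.
have hq2 := sqr_sqrtr (ltW hPx).
have hnb : nbhs x D by exact: hDo.
have dk : is_derive (sqnorm x) 1 kappa ('D_1 kappa (sqnorm x)).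
  exact: derivableP (hk 0%N _ (hDU x Dx)).
have dr : is_derive (sqnorm x) 1 rho ('D_1 rho (sqnorm x)).
  exact: derivableP (hr 0%N _ (hDU x Dx)).
have hA : forall l m v, pd (fun z => a z l m) v x = pd (Aij kappa rho l m) v x.
  move=> l m v; rewrite /pd; apply: near_eq_derive.
  by apply: filterS hnb => z Dz; rewrite Ha' // Nm_entry.
have hB : forall l v, pd (fun z => b z 0 l) v x = pd (Bi kappa rho C l) v x.
  move=> l v; rewrite /pd; apply: near_eq_derive.
  by apply: filterS hnb => z Dz; rewrite Hb' // !mxE.
have pA := fun i j l => pdA i j l dk dr.
rewrite /covd chr_sum hB (pdB C i j dk dr hPx).
set q := Num.sqrt (1 - kappa (sqnorm x) * sqnorm x) in q0 hq2 Hw *.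
set F := Ff rho x.
set k1 := 'D_1 kappa (sqnorm x) in pA *.
set r1 := 'D_1 rho (sqnorm x) in pA *.
have HS : \sum_l (b x *m invmx (a x)) 0 l *
     (pd (fun z => a z l j) i x + pd (fun z => a z l i) j x - pd (fun z => a z i j) l x)
  = C / q * (((- 4 * r1 * F * kappa (sqnorm x) - 2 * F * k1) * x 0 i * x 0 j
              - (2 * F * kappa (sqnorm x) + 4 * r1 * F) * (i == j)%:R) * sqnorm x
             + 4 * r1 * F * x 0 j * x 0 i + 4 * r1 * F * x 0 i * x 0 j).
  transitivity (\sum_l (C / q * ((- 4 * r1 * F * kappa (sqnorm x) - 2 * F * k1) * x 0 i * x 0 j
              - (2 * F * kappa (sqnorm x) + 4 * r1 * F) * (i == j)%:R) * (x 0 l * x 0 l)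
        + (C / q * (4 * r1 * F * x 0 j)) * (x 0 l * (l == i)%:R)
        + (C / q * (4 * r1 * F * x 0 i)) * (x 0 l * (l == j)%:R))).
    apply: eq_bigr => l _; rewrite Hw // mxE !hA !pA (eq_sym i l) (eq_sym j l) (eq_sym j i).
    rewrite -/F; ring.
  rewrite !big_split /= -!mulr_sumr !sum_delta /sqnorm /dotp; ring.
rewrite HS Ha' // Nm_entry /c -/q -/r1.
apply/eqP; rewrite -subr_eq0; apply/eqP.
transitivity (C * F * (4 * r1 + kappa (sqnorm x)) * x 0 i * x 0 j * (q ^+ 2 - (1 - kappa (sqnorm x) * sqnorm x)) / q).
  rewrite -/F; field; done.
by rewrite hq2 subrr !mulr0 mul0r.
Qed.
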